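(* Let $X$ be a Banach lattice with order continuous norm, let $(S_\lambda)_{\lambda\in\Lambda}$ be a family of convex monotone semigroups on $X$, and suppose $S$ is the semigroup envelope of $(S_\lambda)_{\lambda\in\Lambda}$. Then $S(t)x=\sup_{\pi\in P_t}J_\pi x$ for all $t\ge0$ and $x\in X$.
   Context: A Banach lattice $X$ has order continuous norm if $\|x_\alpha\|\to 0$ for every net $x_\alpha\downarrow 0$ (then every nonempty subset bounded above has a supremum). An operator $T\colon X\to X$ is convex if $T(\lambda x+(1-\lambda)y)\le\lambda Tx+(1-\lambda)Ty$, monotone if $x\le y\Rightarrow Tx\le Ty$, bounded if $\sup_{\|x\|\le r}\|Tx\|<\infty$ for all $r>0$. A semigroup on $X$ is a family $(S(t))_{t\ge0}$ of bounded operators $X\to X$ with $S(0)=\mathrm{id}$ and $S(t+s)=S(t)S(s)$; convex/monotone if every $S(t)$ is. For semigroups $S,T$ write $S\le T$ if $S(t)x\le T(t)x$ for all $t,x$. A semigroup is an upper bound of $(S_\lambda)$ if it dominates every $S_\lambda$; the (upper) semigroup envelope is the smallest upper bound. Let $P$ be the set of finite $\pi\subset[0,\infty)$ with $0\in\pi$, $P_t:=\{\pi\in P:\max\pi=t\}$. Define $J_hx:=\sup_{\lambda\in\Lambda}S_\lambda(h)x$ for $h>0$ ($J_0=\mathrm{id}$) and for $\pi=\{t_0<\dots<t_m\}$, $t_0=0$, $J_\pi:=J_{t_1-t_0}\cdots J_{t_m-t_{m-1}}$. *)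

(* Defs.v *)
From HB Require Import structures.
From mathcomp Require Import all_boot all_order all_algebra.
From mathcomp Require Import all_classical all_reals all_analysis.
Set Implicit Arguments. Unset Strict Implicit. Unset Printing Implicit Defensive.
Import Order.TTheory GRing.Theory Num.Theory.
Import numFieldNormedType.Exports.
Local Open Scope classical_set_scope.
Local Open Scope ring_scope.

Section BanachLattice.
Variables (R : realType) (X : completeNormedModType R) (le : X -> X -> Prop).

Definition is_ub (A : set X) (u : X) : Prop := forall a, A a -> le a u.
Definition is_sup (A : set X) (s : X) : Prop :=
  is_ub A s /\ forall u, is_ub A u -> le s u.
Definition is_lb (A : set X) (u : X) : Prop := forall a, A a -> le u a.
Definition is_inf (A : set X) (s : X) : Prop :=
  is_lb A s /\ forall u, is_lb A u -> le u s.

(** the supremum of [A] (when it exists; it is unique by antisymmetry) *)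
Definition supX (A : set X) : X := xget 0 (is_sup A).

Definition absX (x : X) : X := supX [set x; - x].

Record is_banach_lattice : Prop := {
  bl_refl : forall x, le x x;
  bl_antisym : forall x y, le x y -> le y x -> x = y;
  bl_trans : forall x y z, le x y -> le y z -> le x z;
  bl_add : forall x y z, le x y -> le (x + z) (y + z);
  bl_scale : forall (a : R) x y, 0 <= a -> le x y -> le (a *: x) (a *: y);
  bl_sup2 : forall x y, exists s, is_sup [set x; y] s;
  bl_norm : forall x y, le (absX x) (absX y) -> `|x| <= `|y|
}.

(** Order continuous norm: for every net x_a decreasing to 0, ||x_a|| -> 0.
    A net is indexed by a nonempty directed preordered type. *)
Definition order_continuous_norm : Prop :=
  forall (I : Type) (leI : I -> I -> Prop) (x : I -> X),
    inhabited I ->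
    (forall i, leI i i) ->
    (forall i j k, leI i j -> leI j k -> leI i k) ->
    (forall i j, exists k, leI i k /\ leI j k) ->
    (forall i j, leI i j -> le (x j) (x i)) ->
    is_inf (range x) 0 ->
    forall e : R, 0 < e -> exists i0, forall i, leI i0 i -> `|x i| < e.

Definition bounded_op (T : X -> X) : Prop :=
  forall r : R, 0 < r -> exists M : R, forall x, `|x| <= r -> `|T x| <= M.
Definition convex_op (T : X -> X) : Prop :=
  forall (l : R) x y, 0 <= l <= 1 ->
    le (T (l *: x + (1 - l) *: y)) (l *: T x + (1 - l) *: T y).
Definition monotone_op (T : X -> X) : Prop :=
  forall x y, le x y -> le (T x) (T y).

(** semigroups: families indexed by t >= 0 (values at t < 0 are irrelevant) *)
Definition is_semigroup (S : R -> X -> X) : Prop :=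
  (forall t, 0 <= t -> bounded_op (S t)) /\
  (forall x, S 0 x = x) /\
  (forall t s x, 0 <= t -> 0 <= s -> S (t + s) x = S t (S s x)).
Definition convex_semigroup (S : R -> X -> X) : Prop :=
  is_semigroup S /\ forall t, 0 <= t -> convex_op (S t).
Definition monotone_semigroup (S : R -> X -> X) : Prop :=
  is_semigroup S /\ forall t, 0 <= t -> monotone_op (S t).

Definition sg_le (S T : R -> X -> X) : Prop :=
  forall t x, 0 <= t -> le (S t x) (T t x).

Definition is_upper_bound (L : Type) (Sf : L -> R -> X -> X)
    (T : R -> X -> X) : Prop :=
  is_semigroup T /\ forall l, sg_le (Sf l) T.

Definition is_envelope (L : Type) (Sf : L -> R -> X -> X)
    (S : R -> X -> X) : Prop :=
  is_upper_bound Sf S /\ forall T, is_upper_bound Sf T -> sg_le S T.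

Definition Jh (L : Type) (Sf : L -> R -> X -> X) (h : R) (x : X) : X :=
  if h == 0 then x else supX [set Sf l h x | l in [set: L]].

(** a finite set pi in P (0 in pi, pi subset [0,oo)) is represented by its
    strictly increasing enumeration [t_0 = 0; t_1; ...; t_m] *)
Definition partition_of (t : R) (pi : seq R) : Prop :=
  sorted <%R pi /\ head 1 pi = 0 /\ last 0 pi = t.

Fixpoint Jpi (L : Type) (Sf : L -> R -> X -> X) (pi : seq R) (x : X) : X :=
  match pi with
  | a :: ((b :: _) as s) => Jh Sf (b - a) (Jpi Sf s x)
  | _ => x
  end.

End BanachLattice.

(* Main.v *)
Require Import Defs.
From HB Require Import structures.
From mathcomp Require Import all_boot all_order all_algebra.
From mathcomp Require Import all_classical all_reals all_analysis.
From mathcomp Require Import ring lra.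
Import Order.TTheory GRing.Theory Num.Theory.
Import numFieldNormedType.Exports.
Local Open Scope classical_set_scope.
Local Open Scope ring_scope.
Set Implicit Arguments. Unset Strict Implicit. Unset Printing Implicit Defensive.

Lemma convex_id (R : fieldType) (V : lmodType R) (mu : R) (a d : V) : mu != 0 ->
  mu *: (a + mu^-1 *: (d - a)) + (1 - mu) *: a = d.
Proof.
move=> mu0; rewrite scalerDr scalerA mulfV // scale1r scalerBl scale1r.
by rewrite addrC addrA addrNK addrC subrK.
Qed.
Lemma convex_id2 (R : fieldType) (V : lmodType R) (mu : R) (p q : V) :
  mu *: p + (1 - mu) *: q - q = mu *: (p - q).
Proof. by rewrite scalerBl scale1r scalerBr addrAC addrA subrK. Qed.

Section Lat.
Variables (R : realType) (X : completeNormedModType R) (le : X -> X -> Prop).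
Hypothesis HBL : is_banach_lattice le.

Let lerf := bl_refl HBL.
Let letr := bl_trans HBL.
Let leanti := bl_antisym HBL.

Lemma ladd x y z : le x y -> le (x + z) (y + z).
Proof. exact: bl_add. Qed.
Lemma lscale (a : R) x y : 0 <= a -> le x y -> le (a *: x) (a *: y).
Proof. exact: bl_scale. Qed.
Lemma lnorm x y : le (absX le x) (absX le y) -> `|x| <= `|y|.
Proof. exact: bl_norm. Qed.

Lemma le_add2 a b c d : le a b -> le c d -> le (a + c) (b + d).
Proof.
move=> h1 h2; apply: (letr (ladd c h1)).
by rewrite (addrC b c) (addrC b d); apply: bl_add.
Qed.

Lemma le_sub0 a b : le a b <-> le 0 (b - a).
Proof.
split=> h.
  by have := ladd (- a) h; rewrite subrr.
by have := ladd a h; rewrite add0r subrK.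
Qed.

Lemma le_opp a b : le a b -> le (- b) (- a).
Proof.
move=> h; have := ladd (- a - b) h.
have e1 : a + (- a - b) = - b by rewrite addrA subrr add0r.
have e2 : b + (- a - b) = - a by rewrite addrC addrNK.
by rewrite e1 e2.
Qed.

Lemma supXP (A : set X) : (exists s, is_sup le A s) -> is_sup le A (supX le A).
Proof. by move=> h; rewrite /supX; apply: xgetPex. Qed.

Lemma sup_uniq (A : set X) s s' : is_sup le A s -> is_sup le A s' -> s = s'.
Proof. by move=> [h1 h2] [h3 h4]; apply: leanti; [apply: h2|apply: h4]. Qed.

Lemma supX_eq (A : set X) s : is_sup le A s -> supX le A = s.
Proof. by move=> h; apply: (sup_uniq (supXP (ex_intro _ s h)) h). Qed.

Lemma is_sup2 x y s : le x s -> le y s -> (forall u, le x u -> le y u -> le s u) ->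
  is_sup le [set x; y] s.
Proof.
move=> hx hy hl; split; first by move=> a /= [->|->].
by move=> u hu; apply: hl; apply: hu => /=; [left|right].
Qed.

Lemma sup2P x y : is_sup le [set x; y] (supX le [set x; y]).
Proof. by apply: supXP; apply: bl_sup2. Qed.

Lemma sup2_l x y : le x (supX le [set x; y]).
Proof. by have [h _] := sup2P x y; apply: h => /=; left. Qed.
Lemma sup2_r x y : le y (supX le [set x; y]).
Proof. by have [h _] := sup2P x y; apply: h => /=; right. Qed.
Lemma sup2_least x y u : le x u -> le y u -> le (supX le [set x; y]) u.
Proof. by move=> h1 h2; have [_ h] := sup2P x y; apply: h => a /= [->|->]. Qed.

Lemma abs_ge x : le x (absX le x).
Proof. exact: sup2_l. Qed.
Lemma abs_geN x : le (- x) (absX le x).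
Proof. exact: sup2_r. Qed.

Lemma le_half a : le 0 (a + a) -> le 0 a.
Proof.
move=> h; have h2 : (0:R) <= 2^-1 by rewrite invr_ge0 ler0n.
have := lscale h2 h.
have e : 2^-1 *: (a + a) = a.
  have h1 : (2^-1 + 2^-1 : R) = 1 by rewrite [RHS]splitr mul1r.
  by rewrite scalerDr -scalerDl h1 scale1r.
by rewrite scaler0 e.
Qed.

Lemma abs_ge0 x : le 0 (absX le x).
Proof.
apply: le_half; have := le_add2 (abs_ge x) (abs_geN x); by rewrite subrr.
Qed.

Lemma abs_pos p : le 0 p -> absX le p = p.
Proof.
move=> hp; apply: supX_eq; apply: is_sup2.
- exact: lerf.
- have := le_opp hp; rewrite oppr0 => h; exact: letr h hp.
- by move=> u h _.
Qed.

Lemma abs_abs x : absX le (absX le x) = absX le x.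
Proof. exact/abs_pos/abs_ge0. Qed.

Lemma norm_abs x : `|absX le x| = `|x|.
Proof.
apply/le_anti/andP; split; apply: (lnorm); rewrite abs_abs; exact: lerf.
Qed.

Lemma norm_mono a b : le 0 a -> le a b -> `|a| <= `|b|.
Proof.
move=> ha hab; apply: (lnorm); rewrite (abs_pos ha).
apply: letr hab _; exact: abs_ge.
Qed.

Lemma norm_sandwich a z b : le a z -> le z b -> `|z| <= `|a| + `|b|.
Proof.
move=> haz hzb.
have hp : le 0 (absX le a + absX le b).
  by have := le_add2 (abs_ge0 a) (abs_ge0 b); rewrite addr0.
have h : le (absX le z) (absX le a + absX le b).
  apply: sup2_least.
    apply: letr hzb _; have := le_add2 (abs_ge0 a) (abs_ge b); rewrite add0r; exact.
  apply: letr (le_opp haz) _.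
  have := le_add2 (abs_geN a) (abs_ge0 b); rewrite addr0; exact.
have h2 := lnorm (y := absX le a + absX le b); rewrite (abs_pos hp) in h2.
have {}h2 := h2 z h.
by apply: le_trans h2 _; rewrite -(norm_abs a) -(norm_abs b) ler_normD.
Qed.

Lemma closed_cone w : (forall e : R, 0 < e -> exists p, le 0 p /\ `|p - w| < e) -> le 0 w.
Proof.
move=> H; set n := supX le [set - w; 0].
have hn0 : le 0 n by exact: sup2_r.
have key : forall p, le 0 p -> `|n| <= `|p - w|.
  move=> p hp; rewrite -(norm_abs (p - w)); apply: norm_mono => //.
  apply: sup2_least; last exact: abs_ge0.
  apply: letr (abs_ge _); have := le_add2 hp (lerf (- w)); rewrite add0r; exact.
have : `|n| = 0.
  apply/eqP; rewrite eq_le normr_ge0 andbT; apply/ler_addgt0Pr => e e0.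
  have [p [hp hpe]] := H e e0; rewrite add0r; apply: le_trans (key p hp) _; exact: ltW.
move/normr0_eq0 => n0.
have : le (- w) 0 by rewrite -n0; exact: sup2_l.
by move/le_opp; rewrite opprK oppr0.
Qed.


Lemma small_inv (e : R) : 0 < e -> exists N : nat, forall n, (N <= n)%N -> (n.+1%:R)^-1 < e.
Proof.
move=> e0; have he : 0 <= e^-1 by rewrite invr_ge0 ltW.
have h := archi_boundP he.
exists (Num.bound e^-1) => n hn.
rewrite invf_plt ?posrE ?ltr0Sn //; apply: lt_le_trans h _.
by rewrite ler_nat; apply: leq_trans hn _.
Qed.

Lemma cauchy_lim (a : nat -> X) :
  (forall e : R, 0 < e -> exists N, forall m n, (N <= m)%N -> (N <= n)%N -> `|a m - a n| < e) ->
  exists s, forall e : R, 0 < e -> exists N, forall n, (N <= n)%N -> `|s - a n| < e.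
Proof.
move=> H.
have : cvgn a.
  apply/cauchy_cvgP/cauchy_ballP => e e0; rewrite near_map2.
  have [N HN] := H e e0.
  near=> m n; rewrite -ball_normE /=.
  apply: HN; [near: m | near: n]; exact: nbhs_infty_ge.
move/cvgrPdist_lt => h; exists (limn a) => e e0.
have [N _ HN] := h e e0. exists N => n hn. exact: HN.
Unshelve. all: by end_near. Qed.

Definition fsup (a0 : X) (s : seq X) := foldr (fun a acc => supX le [set a; acc]) a0 s.

Lemma fsup_ub a0 s a : List.In a (a0 :: s) -> le a (fsup a0 s).
Proof.
elim: s a => [|b s IH] a /=.
  by move=> [<-|[]]; exact: lerf.
move=> [<-|[<-|h]].
- apply: letr _ (sup2_r _ _); apply: IH; by left.
- exact: sup2_l.
- apply: letr _ (sup2_r _ _); apply: IH; by right.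
Qed.

Lemma fsup_least a0 s u : (forall a, List.In a (a0 :: s) -> le a u) -> le (fsup a0 s) u.
Proof.
elim: s => [|b s IH] /= H.
  by apply: H; left.
apply: sup2_least; first by apply: H; right; left.
apply: IH => a [<-|h]; apply: H; [left | right; right] => //.
Qed.

Lemma fsup_sub a0 s s' : (forall a, List.In a s -> List.In a s') -> le (fsup a0 s) (fsup a0 s').
Proof.
move=> H; apply: fsup_least => a [->|h]; apply: fsup_ub; [left | right; exact: H] => //.
Qed.

Hypothesis Hoc : order_continuous_norm le.

Lemma dedekind (A : set X) a0 u : A a0 -> is_ub le A u -> exists s, is_sup le A s.
Proof.
move=> Aa0 ubu.
pose V := {s : seq X | forall a, List.In a s -> A a}.
pose U := {v : X | is_ub le A v}.
pose f (s : V) := fsup a0 (sval s).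
have fub (s : V) v : is_ub le A v -> le (f s) v.
  move=> hv; apply: fsup_least => a [<-|h]; apply: hv => //; exact: (svalP s).
pose m v v' := - supX le [set - v; - v'].
have m_ub v v' : is_ub le A v -> is_ub le A v' -> is_ub le A (m v v').
  move=> h1 h2 a Aa; rewrite -[a]opprK; apply: le_opp.
  by apply: sup2_least; apply: le_opp; [exact: h1 | exact: h2].
have m_l v v' : le (m v v') v.
  by rewrite -[v in le _ v]opprK; apply: le_opp; exact: sup2_l.
have m_r v v' : le (m v v') v'.
  by rewrite -[v' in le _ v']opprK; apply: le_opp; exact: sup2_r.
pose I := (V * U)%type.
pose leI (i j : I) := le (f i.1) (f j.1) /\ le (sval j.2) (sval i.2).
pose x (i : I) := sval i.2 - f i.1.
have key : forall e : R, 0 < e -> exists s0 : V, forall s : V, le (f s0) (f s) -> `|f s - f s0| < e.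
  move=> e e0.
  have s00 : forall a, List.In a [::] -> A a by [].
  have hinh : inhabited I by constructor; exact: (exist _ [::] s00, exist _ u ubu).
  have [i0 Hi0] : exists i0, forall i, leI i0 i -> `|x i| < e.
  refine (@Hoc I leI x hinh _ _ _ _ _ e e0).
  - by move=> i; split; exact: lerf.
  - by move=> i j k [h1 h2] [h3 h4]; split; [exact: letr h1 h3 | exact: letr h4 h2].
  - move=> [s1 v1] [s2 v2].
    have s12 : forall a, List.In a (sval s1 ++ sval s2) -> A a.
      move=> a h; case: (List.in_app_or _ _ _ h) => hh; [exact: (svalP s1 a hh) | exact: (svalP s2 a hh)].
    exists (exist _ _ s12, exist _ (m (sval v1) (sval v2)) (m_ub _ _ (svalP v1) (svalP v2))).
    split; split => /=; try exact: m_l; try exact: m_r;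
      apply: fsup_sub => a h; apply: List.in_or_app; by [left|right].
  - move=> i j [h1 h2]; rewrite /x; apply: le_add2 h2 _; exact: le_opp.
  - split.
      move=> _ [i _ <-]; rewrite /x; apply/(le_sub0 (f i.1) (sval i.2)); exact: (fub i.1 _ (svalP i.2)).
    move=> w hw.
    have step : forall v, is_ub le A v -> is_ub le A (v - w).
      move=> v hv a Aa.
      have sa : forall b, List.In b [:: a] -> A b by move=> b [<-|[]].
      have := hw _ (ex_intro2 _ _ (exist _ _ sa, exist _ v hv) Logic.I erefl).
      rewrite /x /= => h1.
      have h2 : le a (fsup a0 [:: a]) by apply: fsup_ub; right; left.
      apply: letr h2 _; have := ladd (fsup a0 [:: a] - w) h1.
      have e1 : w + (fsup a0 [:: a] - w) = fsup a0 [:: a] by rewrite addrC subrK.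
      have e2 : v - fsup a0 [:: a] + (fsup a0 [:: a] - w) = v - w by rewrite addrA subrK.
      by rewrite e1 e2.
    have stepn : forall n : nat, is_ub le A (u - w *+ n).
      elim=> [|n IH]; first by rewrite mulr0n subr0.
      have := step _ IH; rewrite mulrS; have -> : u - w *+ n - w = u - (w + w *+ n).
        by rewrite opprD addrA addrAC.
      done.
    have hn : forall n : nat, le (w *+ n) (u - a0).
      move=> n; have h1 := stepn n a0 Aa0.
      have := ladd (w *+ n - a0) h1.
      have e1 : a0 + (w *+ n - a0) = w *+ n by rewrite addrC subrK.
      have e2 : u - w *+ n + (w *+ n - a0) = u - a0 by rewrite addrA subrK.
      by rewrite e1 e2.
    suff : le 0 (- w) by move/le_opp; rewrite opprK oppr0.
    apply: closed_cone => eps eps0.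
    set c := `|u - a0|.
    have hc : 0 < eps / (c + 1) by apply: divr_gt0 => //; rewrite ltr_pwDr // normr_ge0.
    have [N HN] := small_inv hc.
    exists ((N.+1%:R)^-1 *: (u - a0) - w); split.
      apply/(le_sub0 w); have := lscale (a := (N.+1%:R)^-1) _ (hn N.+1).
      have e3 : (N.+1%:R : R)^-1 *: (w *+ N.+1) = w.
        by rewrite -scalerMnr scalerMnl -[(_^-1) *+ _]mulr_natr mulVf ?pnatr_eq0 // scale1r.
      rewrite e3; apply; by rewrite invr_ge0 ler0n.
    have e4 : (N.+1%:R)^-1 *: (u - a0) - w - - w = (N.+1%:R : R)^-1 *: (u - a0).
      by rewrite opprK subrK.
    rewrite e4 normrZ ger0_norm ?invr_ge0 ?ler0n //.
    have hN := HN N (leqnn N).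
    apply: le_lt_trans (_ : (N.+1%:R : R)^-1 * (c + 1) < eps).
      by rewrite ler_pM2l ?invr_gt0 ?ltr0Sn // lerDl.
    by rewrite -ltr_pdivlMr ?ltr_pwDr ?normr_ge0.
  exists i0.1 => s hs.
  have h1 : `|x i0| < e := Hi0 i0 (conj (lerf _) (lerf _)).
  apply: le_lt_trans h1; rewrite /x; apply: norm_mono.
    by apply/(le_sub0 (f i0.1) (f s)).
  exact: (ladd (- f i0.1) (fub s _ (svalP i0.2))).
have join : forall s1 s2 : V, exists s : V, le (f s1) (f s) /\ le (f s2) (f s).
  move=> s1 s2.
  have s12 : forall a, List.In a (sval s1 ++ sval s2) -> A a.
    move=> a h; case: (List.in_app_or _ _ _ h) => hh; [exact: (svalP s1 a hh) | exact: (svalP s2 a hh)].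
  exists (exist _ _ s12); split;
    apply: fsup_sub => a h; apply: List.in_or_app; by [left|right].
have kn : forall n : nat, exists s0 : V, forall s : V, le (f s0) (f s) -> `|f s - f s0| < (n.+1%:R)^-1.
  by move=> n; apply: key; rewrite invr_gt0 ltr0Sn.
have [g Hg] := choice kn.
pose a n := f (g n).
have [sig Hsig] : exists s, forall e : R, 0 < e -> exists N, forall n, (N <= n)%N -> `|s - a n| < e.
  apply: cauchy_lim => e e0.
  have [N HN] := small_inv (divr_gt0 e0 (ltr0Sn R 1)).
  exists N => k n hm hn.
  have [s [h1 h2]] := join (g k) (g n).
  apply: le_lt_trans (ler_distD (f s) _ _) _.
  rewrite distrC (splitr e); apply: ltrD.
    exact: lt_trans (Hg k s h1) (HN k hm).
  exact: lt_trans (Hg n s h2) (HN n hn).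
exists sig; split.
  move=> b Ab; apply/(le_sub0 b sig); apply: closed_cone => eps eps0.
  have [N1 HN1] := small_inv (divr_gt0 eps0 (ltr0Sn R 1)).
  have [N2 HN2] := Hsig _ (divr_gt0 eps0 (ltr0Sn R 1)).
  pose n := maxn N1 N2.
  have sb : forall c, List.In c (b :: sval (g n)) -> A c.
    by move=> c [<-|h] //; exact: (svalP (g n) c h).
  pose s : V := exist _ _ sb.
  have hs1 : le (a n) (f s) by apply: fsup_sub => c h; right.
  have hs2 : le b (f s) by apply: fsup_ub; right; left.
  exists (f s - b); split; first by apply/(le_sub0 b (f s)).
  have e1 : f s - b - (sig - b) = f s - sig by rewrite opprB addrA subrK.
  rewrite e1; apply: le_lt_trans (ler_distD (a n) _ _) _.
  rewrite (splitr eps); apply: ltrD.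
    exact: lt_trans (Hg n s hs1) (HN1 n (leq_maxl _ _)).
  by rewrite distrC; exact: HN2 n (leq_maxr _ _).
move=> v hv; apply/(le_sub0 sig v); apply: closed_cone => eps eps0.
have [N HN] := Hsig _ eps0.
exists (v - a N); split; first by apply/(le_sub0 (a N) v); exact: fub.
have e1 : v - a N - (v - sig) = sig - a N by rewrite opprB addrC addrA subrK.
by rewrite e1; exact: HN.
Qed.


Section Ops.
Variables (L : Type) (Sf : L -> R -> X -> X) (S : R -> X -> X).
Hypothesis Hconv : forall l, convex_semigroup le (Sf l).
Hypothesis Hmon : forall l, monotone_semigroup le (Sf l).
Hypothesis Henv : is_envelope le Sf S.
Variable l0 : L.

Local Notation J := (Jh le Sf).

Lemma S0 y : S 0 y = y.
Proof. by have [[_ [h _]] _] := Henv.1. Qed.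
Lemma SD t s y : 0 <= t -> 0 <= s -> S (t + s) y = S t (S s y).
Proof. by have [[_ [_ h]] _] := Henv.1; apply: h. Qed.
Lemma SfS l h y : 0 <= h -> le (Sf l h y) (S h y).
Proof. by move=> h0; have [_ H] := Henv.1; apply: H. Qed.
Lemma Sf_mono l h y y' : 0 <= h -> le y y' -> le (Sf l h y) (Sf l h y').
Proof. by move=> h0; have [_ H] := Hmon l; apply: H. Qed.
Lemma SfD l t s y : 0 <= t -> 0 <= s -> Sf l (t + s) y = Sf l t (Sf l s y).
Proof. by have [[_ [_ h]] _] := Hmon l; apply: h. Qed.
Lemma Sf0 l y : Sf l 0 y = y.
Proof. by have [[_ [h _]] _] := Hmon l. Qed.

Lemma J0 y : J 0 y = y.
Proof. by rewrite /Jh eqxx. Qed.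

Lemma J_sup h y : 0 < h -> is_sup le [set Sf l h y | l in [set: L]] (J h y).
Proof.
move=> h0; rewrite /Jh (gt_eqF h0); apply: supXP.
apply: (@dedekind _ (Sf l0 h y) (S h y)); first by exists l0.
by move=> _ [l _ <-]; apply: SfS; exact: ltW.
Qed.

Lemma Sf_le_J l h y : 0 < h -> le (Sf l h y) (J h y).
Proof. by move=> h0; have [H _] := J_sup y h0; apply: H; exists l. Qed.

Lemma J_le_S h y : 0 <= h -> le (J h y) (S h y).
Proof.
rewrite le_eqVlt => /orP [/eqP <-|h0]; first by rewrite J0 S0; exact: lerf.
have [_ H] := J_sup y h0; apply: H => _ [l _ <-]; apply: SfS; exact: ltW.
Qed.

Lemma J_mono h y y' : 0 <= h -> le y y' -> le (J h y) (J h y').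
Proof.
rewrite le_eqVlt => /orP [/eqP <-|h0] hy; first by rewrite !J0.
have [_ H] := J_sup y h0; apply: H => _ [l _ <-].
apply: letr (Sf_le_J l y' h0); apply: Sf_mono => //; exact: ltW.
Qed.

Lemma J_split a b y : 0 < a -> 0 < b -> le (J (a + b) y) (J a (J b y)).
Proof.
move=> a0 b0; have [_ H] := J_sup y (addr_gt0 a0 b0); apply: H => _ [l _ <-].
rewrite SfD ?ltW //; apply: letr (Sf_le_J l _ a0); apply: Sf_mono; first exact: ltW.
exact: Sf_le_J.
Qed.

Definition Jc (c : seq R) (y : X) := foldr (fun h acc => J h acc) y c.
Definition pos (c : seq R) := all (fun h => 0 < h) c.
Definition comp (t : R) (c : seq R) := pos c /\ \sum_(h <- c) h = t.

Lemma Jc_nil y : Jc [::] y = y. Proof. by []. Qed.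
Lemma Jc_cons h c y : Jc (h :: c) y = J h (Jc c y). Proof. by []. Qed.

Lemma Jc_cat c1 c2 y : Jc (c1 ++ c2) y = Jc c1 (Jc c2 y).
Proof. by rewrite /Jc foldr_cat. Qed.

Lemma Jc_mono c y y' : pos c -> le y y' -> le (Jc c y) (Jc c y').
Proof.
elim: c => [|h c IH] // /andP [h0 pc] hy.
rewrite !Jc_cons; apply: J_mono; [exact: ltW | exact: IH].
Qed.

Lemma sum_ge0 c : pos c -> 0 <= \sum_(h <- c) h.
Proof.
elim: c => [|h c IH]; first by rewrite big_nil.
by move=> /andP [h0 pc]; rewrite big_cons addr_ge0 ?IH // ltW.
Qed.

Lemma sum_pos0 c : pos c -> \sum_(h <- c) h = 0 -> c = [::].
Proof.
case: c => [//|h c] /andP [h0 pc]; rewrite big_cons => e.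
have : 0 < h + \sum_(h <- c) h by rewrite ltr_pwDl // sum_ge0.
by rewrite e ltxx.
Qed.

Lemma Jc_le_S c y : pos c -> le (Jc c y) (S (\sum_(h <- c) h) y).
Proof.
elim: c => [|h c IH]; first by move=> _; rewrite big_nil S0 Jc_nil; exact: lerf.
move=> /andP [h0 pc]; rewrite big_cons (SD _ (ltW h0) (sum_ge0 pc)) Jc_cons.
apply: letr _ (J_le_S _ (ltW h0)); apply: J_mono; [exact: ltW | exact: IH].
Qed.

Definition Rf (c c' : seq R) := forall y, le (Jc c y) (Jc c' y).

Lemma Rf_refl c : Rf c c.
Proof. by move=> y; exact: lerf. Qed.
Lemma Rf_trans c1 c2 c3 : Rf c1 c2 -> Rf c2 c3 -> Rf c1 c3.
Proof. by move=> h1 h2 y; exact: letr (h1 y) (h2 y). Qed.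
Lemma Rf_cons h c c' : 0 < h -> Rf c c' -> Rf (h :: c) (h :: c').
Proof. by move=> h0 H y; rewrite !Jc_cons; apply: J_mono; [exact: ltW | exact: H]. Qed.
Lemma Rf_split a b c : 0 < a -> 0 < b -> Rf ((a + b) :: c) (a :: b :: c).
Proof. by move=> a0 b0 y; rewrite !Jc_cons; exact: J_split. Qed.


Fixpoint merge (n : nat) (c1 c2 : seq R) : seq R :=
  match n with
  | 0 => c1
  | n'.+1 => match c1, c2 with
     | [::], _ => c2
     | _, [::] => c1
     | a :: s1, b :: s2 =>
       if a < b then a :: merge n' s1 ((b - a) :: s2)
       else if b < a then b :: merge n' ((a - b) :: s1) s2
       else a :: merge n' s1 s2
     end
  end.

Lemma merge_spec n c1 c2 : (size c1 + size c2 <= n)%N -> pos c1 -> pos c2 ->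
  \sum_(h <- c1) h = \sum_(h <- c2) h ->
  pos (merge n c1 c2) /\ \sum_(h <- merge n c1 c2) h = \sum_(h <- c1) h /\
  Rf c1 (merge n c1 c2) /\ Rf c2 (merge n c1 c2).
Proof.
elim: n c1 c2 => [|n IH] c1 c2.
  case: c1 => [|? ?]; case: c2 => [|? ?] //= _ _ _ _.
case: c1 => [|a s1]; case: c2 => [|b s2].
- by move=> _ _ _ _; split => //; split => //; split; exact: Rf_refl.
- move=> _ _ pc2 e; have := sum_pos0 pc2; rewrite -e big_nil => /(_ erefl) //.
- move=> _ pc1 _ e; have := sum_pos0 pc1; rewrite e big_nil => /(_ erefl) //.
have -> : merge n.+1 (a :: s1) (b :: s2) = if a < b then a :: merge n s1 ((b - a) :: s2)
       else if b < a then b :: merge n ((a - b) :: s1) s2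
       else a :: merge n s1 s2 by [].
rewrite /= !big_cons addnS addSn ltnS => hs /andP [a0 p1] /andP [b0 p2] e.
case: ltgtP => hab.
- have hp : pos ((b - a) :: s2) by rewrite /= subr_gt0 hab.
  have hsum : \sum_(h <- s1) h = \sum_(h <- (b - a) :: s2) h.
    by rewrite big_cons; lra.
  have hsz : (size s1 + size ((b - a)%R :: s2) <= n)%N by rewrite /= addnS.
  have [pm [sm [r1 r2]]] := IH _ _ hsz p1 hp hsum.
  split; first by rewrite /= a0.
  split; first by rewrite big_cons sm.
  split; first exact: Rf_cons.
  apply: Rf_trans (_ : Rf _ (a :: (b - a) :: s2)) _; last exact: Rf_cons.
  have -> : (b :: s2) = (a + (b - a)) :: s2 by congr (_ :: _); lra.
  by apply: Rf_split => //; rewrite subr_gt0.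
- have hp : pos ((a - b) :: s1) by rewrite /= subr_gt0 hab.
  have hsum : \sum_(h <- (a - b) :: s1) h = \sum_(h <- s2) h.
    by rewrite big_cons; lra.
  have hsz : (size ((a - b)%R :: s1) + size s2 <= n)%N by rewrite /= addSn.
  have [pm [sm [r1 r2]]] := IH _ _ hsz hp p2 hsum.
  split; first by rewrite /= b0.
  split; first by rewrite big_cons sm big_cons; lra.
  split; last exact: Rf_cons.
  apply: Rf_trans (_ : Rf _ (b :: (a - b) :: s1)) _; last exact: Rf_cons.
  have -> : (a :: s1) = (b + (a - b)) :: s1 by congr (_ :: _); lra.
  by apply: Rf_split => //; rewrite subr_gt0.
- subst b.
  have hsum : \sum_(h <- s1) h = \sum_(h <- s2) h by lra.
  have hsz : (size s1 + size s2 <= n)%N by apply: ltnW.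
  have [pm [sm [r1 r2]]] := IH _ _ hsz p1 p2 hsum.
  split; first by rewrite /= a0.
  split; first by rewrite big_cons sm.
  by split; exact: Rf_cons.
Qed.

Lemma comp_directed s c1 c2 : comp s c1 -> comp s c2 ->
  exists c, comp s c /\ Rf c1 c /\ Rf c2 c.
Proof.
move=> [p1 e1] [p2 e2].
have [pm [sm [r1 r2]]] := merge_spec (leqnn (size c1 + size c2)) p1 p2 (etrans e1 (esym e2)).
by eexists; split; first split; [exact: pm | rewrite sm | split].
Qed.

Fixpoint splitc (t : R) (c : seq R) : seq R * seq R :=
  match c with
  | [::] => ([::], [::])
  | h :: c' => if h <= t then let pq := splitc (t - h) c' in (h :: pq.1, pq.2)
               else if 0 < t then ([:: t], (h - t) :: c')
               else ([::], c)
  end.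

Lemma split_spec c t : pos c -> 0 <= t -> t <= \sum_(h <- c) h ->
  comp t (splitc t c).1 /\ comp (\sum_(h <- c) h - t) (splitc t c).2 /\
  Rf c ((splitc t c).1 ++ (splitc t c).2).
Proof.
elim: c t => [|h c IH] t /=.
  rewrite big_nil => _ t0 t1; have -> : t = 0 by apply/le_anti; rewrite t0 t1.
  by split; [|split]; [split; rewrite ?big_nil | split; rewrite ?big_nil ?subr0 | exact: Rf_refl].
move=> /andP [h0 pc]; rewrite big_cons => t0 t1.
case: ifP => ht.
  have t0' : 0 <= t - h by rewrite subr_ge0.
  have t1' : t - h <= \sum_(j <- c) j by lra.
  have [[pp sp] [[pq sq] r]] := IH _ pc t0' t1'.
  split; first by split; [rewrite /= h0 | rewrite /= big_cons sp; lra].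
  split; first by split => //; rewrite sq; lra.
  by rewrite cat_cons; apply: Rf_cons.
case: ifP => t0s.
  split; first by split; [rewrite /= t0s | rewrite big_cons big_nil addr0].
  have htp : 0 < h - t by rewrite subr_gt0 ltNge ht.
  split; first by split; [rewrite /= htp pc | rewrite big_cons; lra].
  rewrite /=.
  have e : h = t + (h - t) by lra.
  by rewrite {1}e; apply: Rf_split.
have -> : t = 0 by apply/le_anti; rewrite t0 andbT leNgt t0s.
split; first by split; rewrite ?big_nil.
split; first by split; [rewrite /= h0 pc | rewrite big_cons subr0].
exact: Rf_refl.
Qed.


Definition T t y := supX le [set Jc c y | c in comp t].

Lemma comp_nonempty t : 0 <= t -> exists c, comp t c.
Proof.
rewrite le_eqVlt => /orP [/eqP <-|t0].
  by exists [::]; split => //; rewrite big_nil.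
by exists [:: t]; split; [rewrite /= t0 | rewrite big_cons big_nil addr0].
Qed.

Lemma T_sup t y : 0 <= t -> is_sup le [set Jc c y | c in comp t] (T t y).
Proof.
move=> t0; apply: supXP; have [c hc] := comp_nonempty t0.
apply: (@dedekind _ (Jc c y) (S t y)); first by exists c.
move=> _ [c' [pc sc] <-]; rewrite -sc; exact: Jc_le_S.
Qed.

Definition directed (D : set X) := forall a b, D a -> D b -> exists c, D c /\ le a c /\ le b c.

Lemma approx D d : (exists a, D a) -> directed D -> is_sup le D d ->
  forall e : R, 0 < e -> exists a, D a /\ `|d - a| < e.
Proof.
move=> [a0 Da0] dir [ub lst] e e0.
pose I := {a | D a}.
pose leI (i j : I) := le (sval i) (sval j).
pose x (i : I) := d - sval i.
have [i0 H] : exists i0, forall i, leI i0 i -> `|x i| < e.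
  refine (@Hoc I leI x (inhabits (exist _ a0 Da0)) _ _ _ _ _ e e0).
  - by move=> i; exact: lerf.
  - by move=> i j k; exact: letr.
  - move=> [a Da] [b Db]; have [c [Dc [h1 h2]]] := dir a b Da Db.
    by exists (exist _ c Dc).
  - by move=> i j h; apply: le_add2 (lerf d) (le_opp h).
  - split.
      by move=> _ [i _ <-]; apply/(le_sub0 (sval i) d); exact: ub _ (svalP i).
    move=> w hw.
    have : le d (d - w).
      apply: lst => a Da.
      have h := hw _ (ex_intro2 _ _ (exist _ a Da) Logic.I erefl).
      have := ladd (a - w) h; rewrite /x /=.
      have e1 : w + (a - w) = a by rewrite addrC subrK.
      have e2 : d - a + (a - w) = d - w by rewrite addrA subrK.
      by rewrite e1 e2.
    move/(le_sub0 d (d - w)).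
    have e3 : d - w - d = - w by rewrite addrC addKr.
    by rewrite e3 => /le_opp; rewrite opprK oppr0.
by exists (sval i0); split; [exact: (svalP i0) | exact: H i0 (lerf _)].
Qed.

Lemma contS l h D d : 0 < h -> (exists a, D a) -> directed D -> is_sup le D d ->
  is_sup le [set Sf l h a | a in D] (Sf l h d).
Proof.
move=> h0 ne dir hd; have [ub lst] := hd; split.
  by move=> _ [a Da <-]; apply: Sf_mono (ltW h0) (ub _ Da).
move=> u hu; apply/(le_sub0 (Sf l h d) u); apply: closed_cone => e e0.
have [hsg hc] := Hconv l; have [hb _] := hsg.
have [M HM] := hb h (ltW h0) (`|d| + 2) (ltr_pwDr (ltr0Sn R 1) (normr_ge0 d)).
set K := 2 * `|M| + 1.
have K0 : 0 < K by rewrite ltr_pwDr // mulr_ge0.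
set mu := Num.min 1 (e / K).
have mu0 : 0 < mu by rewrite lt_min ltr01 divr_gt0.
have mu1 : mu <= 1 by rewrite ge_min lexx.
have muK : mu * K <= e by rewrite -ler_pdivlMr // ge_min lexx orbT.
have [a [Da hda]] := approx ne dir hd mu0.
exists (u - Sf l h a); split.
  by apply/(le_sub0 (Sf l h a) u); apply: hu; exists a.
have e1 : u - Sf l h a - (u - Sf l h d) = Sf l h d - Sf l h a.
  by rewrite opprB addrC addrA subrK.
rewrite e1.
pose z := a + mu^-1 *: (d - a).
have hconv := hc h (ltW h0) mu z a (introT andP (conj (ltW mu0) mu1)).
rewrite /z convex_id ?gt_eqF // -/z in hconv.
have h1 : le (Sf l h d - Sf l h a) (mu *: (Sf l h z - Sf l h a)).
  rewrite -convex_id2; exact: ladd.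
have h2 : le 0 (Sf l h d - Sf l h a).
  by apply/(le_sub0 (Sf l h a) (Sf l h d)); apply: Sf_mono (ltW h0) (ub _ Da).
apply: le_lt_trans (norm_mono h2 h1) _.
rewrite normrZ gtr0_norm //.
have hda1 : `|d - a| <= 1 by apply: ltW; apply: lt_le_trans hda mu1.
have ha1 : `|a| <= `|d| + 1.
  have : `|a| <= `|d| + `|d - a|.
    by have := ler_normD d (a - d); rewrite addrC subrK distrC.
  move=> hh; apply: le_trans hh _; rewrite lerD2l //.
have ha : `|a| <= `|d| + 2 by lra.
have hz : `|z| <= `|d| + 2.
  have : `|z| <= `|a| + mu^-1 * `|d - a|.
    by rewrite /z; apply: le_trans (ler_normD _ _) _; rewrite normrZ gtr0_norm ?invr_gt0.
  move=> hh; apply: le_trans hh _.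
  have : mu^-1 * `|d - a| <= 1.
    by rewrite ler_pdivrMl // mulr1; exact: ltW.
  move=> h'; lra.
have hFz := HM z hz; have hFa := HM a ha.
have hM : `|Sf l h z - Sf l h a| < K.
  apply: le_lt_trans (ler_normB _ _) _.
  have := ler_norm M; rewrite /K; lra.
apply: lt_le_trans muK; rewrite ltr_pM2l //.
Qed.


Lemma dir_image (F : X -> X) D : (forall y y', le y y' -> le (F y) (F y')) ->
  directed D -> directed [set F a | a in D].
Proof.
move=> mono dir _ _ [a Da <-] [b Db <-]; have [c [Dc [h1 h2]]] := dir a b Da Db.
by exists (F c); split; [exists c | split; apply: mono].
Qed.

Lemma contJ h D d : 0 < h -> (exists a, D a) -> directed D -> is_sup le D d ->
  is_sup le [set J h a | a in D] (J h d).
Proof.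
move=> h0 ne dir hd; have [ub _] := hd; split.
  by move=> _ [a Da <-]; apply: J_mono (ltW h0) (ub _ Da).
move=> u hu; have [_ lst] := J_sup d h0; apply: lst => _ [l _ <-].
have [_ lst'] := contS l h0 ne dir hd; apply: lst' => _ [a Da <-].
exact: letr (Sf_le_J l a h0) (hu _ (ex_intro2 _ _ a Da erefl)).
Qed.

Lemma contJc c D d : pos c -> (exists a, D a) -> directed D -> is_sup le D d ->
  is_sup le [set Jc c a | a in D] (Jc c d).
Proof.
move=> + ne dir hd; elim: c => [|h c IH].
  move=> _; have [ub lst] := hd; split.
    by move=> _ [a Da <-]; exact: ub.
  by move=> u hu; apply: lst => a Da; apply: hu; exists a.
move=> /andP [h0 pc]; have IHs := IH pc.
have ne' : exists a, [set Jc c a | a in D] a.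
  by have [a Da] := ne; exists (Jc c a); exists a.
have dir' := dir_image (fun y y' => Jc_mono pc (y:=y) (y':=y')) dir.
have [ub lst] := contJ h0 ne' dir' IHs; split.
  by move=> _ [a Da <-]; apply: ub; exists (Jc c a) => //; exists a.
by move=> u hu; apply: lst => _ [b [a Da <-] <-]; apply: hu; exists a.
Qed.

Lemma T_ge_Jc t c y : comp t c -> le (Jc c y) (T t y).
Proof.
move=> [pc sc]; have t0 : 0 <= t by rewrite -sc sum_ge0.
by have [ub _] := T_sup y t0; apply: ub; exists c.
Qed.

Lemma T_least t y u : 0 <= t -> (forall c, comp t c -> le (Jc c y) u) -> le (T t y) u.
Proof. by move=> t0 H; have [_ lst] := T_sup y t0; apply: lst => _ [c hc <-]; exact: H. Qed.

Lemma comp_nil : comp 0 [::].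
Proof. by split => //; rewrite big_nil. Qed.

Lemma T0 y : T 0 y = y.
Proof.
apply: leanti.
  apply: T_least => // c [pc sc]; rewrite (sum_pos0 pc sc) Jc_nil; exact: lerf.
by have := T_ge_Jc y comp_nil; rewrite Jc_nil.
Qed.

Lemma T_le_S t y : 0 <= t -> le (T t y) (S t y).
Proof. by move=> t0; apply: T_least => // c [pc <-]; exact: Jc_le_S. Qed.

Lemma Sf_le_T l t y : 0 <= t -> le (Sf l t y) (T t y).
Proof.
rewrite le_eqVlt => /orP [/eqP <-|t0].
  by rewrite Sf0; exact: (T_ge_Jc y comp_nil).
apply: letr (Sf_le_J l y t0) _.
have : comp t [:: t] by split; [rewrite /= t0 | rewrite big_cons big_nil addr0].
by move/(T_ge_Jc y).
Qed.

Lemma T_bounded t : 0 <= t -> bounded_op (T t).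
Proof.
move=> t0 r r0.
have [hsS _] := Henv.1; have [hbS _] := hsS.
have [hbl _] := (Hmon l0).1.
have [M1 HM1] := hbS t t0 r r0.
have [M2 HM2] := hbl t t0 r r0.
exists (M2 + M1) => x hx.
apply: le_trans (norm_sandwich (Sf_le_T l0 x t0) (T_le_S x t0)) _.
by apply: lerD; [exact: HM2 | exact: HM1].
Qed.

Lemma T_D t s y : 0 <= t -> 0 <= s -> T (t + s) y = T t (T s y).
Proof.
move=> t0 s0; apply: leanti.
  apply: T_least; first exact: addr_ge0.
  move=> c [pc sc].
  have tc : t <= \sum_(h <- c) h by rewrite sc lerDl.
  have [hp [hq r]] := split_spec pc t0 tc.
  rewrite sc in hq; have e : t + s - t = s by rewrite addrC addKr.
  rewrite e in hq.
  apply: letr (r y) _; rewrite Jc_cat.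
  apply: letr (T_ge_Jc _ hp).
  apply: Jc_mono; first by case: hp.
  exact: T_ge_Jc.
apply: T_least => // c1 [pc1 sc1].
pose D := [set Jc c y | c in comp s].
have ne : exists a, D a.
  by have [c hc] := comp_nonempty s0; exists (Jc c y); exists c.
have dir : directed D.
  move=> _ _ [c1' h1 <-] [c2' h2 <-].
  have [c [hc [r1 r2]]] := comp_directed h1 h2.
  by exists (Jc c y); split; [exists c | split].
have [_ lst] := contJc pc1 ne dir (T_sup y s0).
apply: lst => _ [_ [c2 [pc2 sc2] <-] <-].
rewrite -Jc_cat; apply: T_ge_Jc; split.
  by rewrite /pos all_cat; apply/andP.
by rewrite big_cat sc1 sc2.
Qed.

Lemma T_ub : is_upper_bound le Sf T.
Proof.
split; last by move=> l t x t0; exact: Sf_le_T.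
split; first exact: T_bounded.
split; first exact: T0.
by move=> t s x t0 s0; exact: T_D.
Qed.

Lemma main_comp t x : 0 <= t -> is_sup le [set Jc c x | c in comp t] (S t x).
Proof.
move=> t0; split.
  by move=> _ [c [pc <-] <-]; exact: Jc_le_S.
move=> u hu; apply: letr (Henv.2 T T_ub t x t0) _.
by apply: T_least => // c hc; apply: hu; exists c.
Qed.

Fixpoint diffs (p : seq R) : seq R :=
  match p with a :: ((b :: _) as s) => (b - a) :: diffs s | _ => [::] end.

Lemma Jpi_diffs s a y : Jpi le Sf (a :: s) y = Jc (diffs (a :: s)) y.
Proof.
elim: s a => [|b s IH] a //.
have -> : Jpi le Sf (a :: b :: s) y = J (b - a) (Jpi le Sf (b :: s) y) by [].
have -> : diffs (a :: b :: s) = (b - a) :: diffs (b :: s) by [].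
by rewrite Jc_cons IH.
Qed.

Lemma diffs_pos s a : path <%R a s -> pos (diffs (a :: s)).
Proof.
elim: s a => [|b s IH] a //= /andP [ab hs].
by rewrite subr_gt0 ab; exact: IH.
Qed.

Lemma diffs_sum s a : \sum_(h <- diffs (a :: s)) h = last a s - a.
Proof.
elim: s a => [|b s IH] a; first by rewrite big_nil subrr.
have -> : diffs (a :: b :: s) = (b - a) :: diffs (b :: s) by [].
rewrite big_cons IH /=; lra.
Qed.

Fixpoint psums (a : R) (c : seq R) : seq R :=
  match c with [::] => [::] | h :: c' => (a + h) :: psums (a + h) c' end.

Lemma Jpi_psums c a y : Jpi le Sf (a :: psums a c) y = Jc c y.
Proof.
elim: c a => [|h c IH] a //.
have -> : Jpi le Sf (a :: psums a (h :: c)) y = J (a + h - a) (Jpi le Sf ((a + h) :: psums (a + h) c) y) by [].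
by rewrite IH Jc_cons; congr (J _ _); rewrite addrC addKr.
Qed.

Lemma psums_path c a : pos c -> path <%R a (psums a c).
Proof.
elim: c a => [|h c IH] a //= /andP [h0 pc].
by rewrite ltrDl h0 IH.
Qed.

Lemma psums_last c a : last a (psums a c) = a + \sum_(h <- c) h.
Proof.
elim: c a => [|h c IH] a; first by rewrite big_nil addr0.
by rewrite /= IH big_cons addrA.
Qed.

Lemma main_part t x : 0 <= t ->
  is_sup le [set Jpi le Sf pi x | pi in partition_of t] (S t x).
Proof.
move=> t0; have [ub lst] := main_comp x t0; split.
  move=> _ [pi [hs [hh hl]] <-].
  case: pi hs hh hl => [|a s] hs hh hl.
    by move: hh => /= /eqP; rewrite oner_eq0.
  rewrite /= in hh; subst a.
  rewrite Jpi_diffs; apply: ub; exists (diffs (0 :: s)) => //; split.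
    exact: diffs_pos.
  by rewrite diffs_sum subr0.
move=> u hu; apply: lst => _ [c [pc sc] <-].
rewrite -(Jpi_psums c 0 x); apply: hu; exists (0 :: psums 0 c) => //.
split; first exact: psums_path.
by split => //=; rewrite psums_last add0r.
Qed.

End Ops.
End Lat.

Theorem corollary4p5 (R : realType) (X : completeNormedModType R)
    (le : X -> X -> Prop)
    (HBL : is_banach_lattice le) (Hoc : order_continuous_norm le)
    (L : Type) (Sf : L -> R -> X -> X)
    (Hconv : forall l, convex_semigroup le (Sf l))
    (Hmon : forall l, monotone_semigroup le (Sf l))
    (S : R -> X -> X) (Henv : is_envelope le Sf S) :
  forall (t : R) (x : X), 0 <= t ->
    is_sup le [set Jpi le Sf pi x | pi in partition_of t] (S t x).
Proof.
move=> t x t0.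
case: (pselect (inhabited L)) => [[l0]|nL].
  exact: (main_part HBL Hoc Hconv Hmon Henv l0 x t0).
have triv : forall w : X, le w 0.
  move=> w.
  pose Tv (v : X) := fun (t : R) (x : X) => x + t *: v.
  have ubv v : is_upper_bound le Sf (Tv v).
    split; last by move=> l; exfalso; apply: nL; constructor.
    split.
      move=> s s0 r r0; exists (r + s * `|v|) => y hy.
      apply: le_trans (ler_normD _ _) _; rewrite normrZ ger0_norm //.
      by rewrite lerD2r.
    split; first by move=> y; rewrite /Tv scale0r addr0.
    by move=> s1 s2 y _ _; rewrite /Tv scalerDl (addrC (s1 *: v)) addrA.
  have := Henv.2 _ (ubv (S 1 0 - w)) 1 0 ler01.
  rewrite /Tv scale1r add0r => /(le_sub0 HBL).
  have e : S 1 0 - w - S 1 0 = - w by rewrite addrC addKr.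
  by rewrite e => /(le_opp HBL); rewrite opprK oppr0.
have triv0 : forall w : X, w = 0.
  move=> w; apply: (bl_antisym HBL (triv w)).
  by have := le_opp HBL (triv (- w)); rewrite opprK oppr0.
split.
  by move=> a _; rewrite (triv0 a) (triv0 (S t x)); exact: bl_refl.
by move=> u _; rewrite (triv0 u) (triv0 (S t x)); exact: bl_refl.
Qed.
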